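(* Let $R$ be a commutative ring with $2=0$, and let $(A,\mathcal{I},\Omega)$ be an axial decomposition algebra over $R$ (with $A$ commutative) with respect to a fusion law $(X,* )$ equipped with a $\mathbb{Z}/2\mathbb{Z}$-grading $\xi$, such that all axes $a_i$ ($i\in\mathcal{I}$) are idempotents. Then every axis is contained in the zero-core $\bigcap_{i\in\mathcal{I}} A^i_{\xi^{-1}(0)}$. In particular, if $A$ is generated (as an algebra) by its axes, then all the $\mathbb{Z}/2\mathbb{Z}$-decompositions are trivial, i.e. $A^i_{\xi^{-1}(1)}=0$ for all $i\in\mathcal{I}$.
   Context: A fusion law is a pair $(X,* )$ with $*\colon X\times X\to 2^X$; $e\in X$ is a unit if $e*x\subseteq\{x\}$ and $x*e\subseteq\{x\}$ for all $x$. A $\Phi$-decomposition of an $R$-algebra $A$ is a direct sum $A=\bigoplus_{x\in X}A_x$ of $R$-modules with $A_xA_y\subseteq A_{x*y}$, where $A_Y=\bigoplus_{y\in Y}A_y$ (so $A_\emptyset=0$). A $\Phi$-decomposition algebra $(A,\mathcal{I},\Omega)$ is an algebra $A$ with a family $\Omega=((A^i_x)_{x\in X})_{i\in\mathcal{I}}$ of $\Phi$-decompositions. Given a distinguished unit $e\in X$ and parameters $\lambda_x\in R$, it is axial if for each $i$ there is a nonzero $a_i\in A^i_e$ (an axis) with $a_ib=\lambda_xb$ for all $x\in X$ and $b\in A^i_x$. A $\mathbb{Z}/2\mathbb{Z}$-grading of $(X,* )$ is a map $\xi\colon X\to\mathbb{Z}/2\mathbb{Z}$ with $\xi(x*y)\subseteq\{\xi(x)+\xi(y)\}$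 for all $x,y$. All algebras are commutative, not necessarily associative or unital. *)

(* Defs.v *)
From HB Require Import structures.
From mathcomp Require Import all_boot all_order all_algebra.
Set Implicit Arguments. Unset Strict Implicit. Unset Printing Implicit Defensive.
Import GRing.Theory.
Local Open Scope ring_scope.

(* A fusion law (X, * ) is encoded by [star : X -> X -> X -> Prop],
   where [star x y z] means z \in x * y. *)

Definition is_unit (X : Type) (star : X -> X -> X -> Prop) (e : X) : Prop :=
  forall x z, (star e x z -> z = x) /\ (star x e z -> z = x).

Definition is_Z2_grading (X : Type) (star : X -> X -> X -> Prop)
  (xi : X -> 'Z_2) : Prop :=
  forall x y z, star x y z -> xi z = xi x + xi y.

Definition is_comm_algebra (R : comPzRingType) (A : lmodType R)
  (mul : A -> A -> A) : Prop :=
  (forall a b, mul a b = mul b a) /\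
  (forall a b c, mul (a + b) c = mul a c + mul b c) /\
  (forall (r : R) a b, mul (r *: a) b = r *: mul a b).

Definition is_submodule (R : comPzRingType) (A : lmodType R) (P : A -> Prop)
  : Prop :=
  P 0 /\ (forall a b, P a -> P b -> P (a + b)) /\
  (forall (r : R) a, P a -> P (r *: a)).

(* Membership in A_Y = (sum over y in Y of A_y): a finite sum of elements
   a_y \in A_y over distinct y \in Y.  For Y empty this is {0}. *)
Definition in_sum (R : comPzRingType) (A : lmodType R) (X : eqType)
  (V : X -> A -> Prop) (Y : X -> Prop) (a : A) : Prop :=
  exists (s : seq X) (f : X -> A),
    [/\ uniq s, (forall x, x \in s -> Y x /\ V x (f x)) &
        a = \sum_(x <- s) f x].

Definition is_decomposition (R : comPzRingType) (A : lmodType R)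
  (mul : A -> A -> A) (X : eqType) (star : X -> X -> X -> Prop)
  (V : X -> A -> Prop) : Prop :=
  [/\ (forall x, is_submodule (V x)),
      (forall a, in_sum V (fun _ => True) a),
      (forall (s : seq X) (f : X -> A), uniq s ->
          (forall x, x \in s -> V x (f x)) ->
          \sum_(x <- s) f x = 0 -> forall x, x \in s -> f x = 0) &
      (forall x y a b, V x a -> V y b -> in_sum V (star x y) (mul a b))].

Definition is_axial (R : comPzRingType) (A : lmodType R)
  (mul : A -> A -> A) (X : eqType) (I : Type) (V : I -> X -> A -> Prop)
  (e : X) (lam : X -> R) (a : I -> A) : Prop :=
  forall i, [/\ a i != 0, V i e (a i) &
     forall x b, V i x b -> mul (a i) b = lam x *: b].

Definition generated_by (R : comPzRingType) (A : lmodType R)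
  (mul : A -> A -> A) (G : A -> Prop) : Prop :=
  forall S : A -> Prop, is_submodule S ->
    (forall a b, S a -> S b -> S (mul a b)) ->
    (forall a, G a -> S a) -> forall a, S a.

(* Main.v *)
Require Import Defs.
From mathcomp Require Import all_boot all_order all_algebra.
Local Open Scope ring_scope.
Import GRing.Theory.
Set Implicit Arguments. Unset Strict Implicit.

Definition in_sum' (R : comPzRingType) (A : lmodType R) (X : eqType)
  (V : X -> A -> Prop) (Y : X -> Prop) (a : A) : Prop :=
  exists (s : seq (X * A)),
    (forall p, p \in s -> Y p.1 /\ V p.1 p.2) /\ a = \sum_(p <- s) p.2.

Lemma sub_sum (R : comPzRingType) (A : lmodType R) (P : A -> Prop) (T : Type)
  (r : seq T) (Q : pred T) (F : T -> A) : is_submodule P ->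
  (forall i, Q i -> P (F i)) -> P (\sum_(i <- r | Q i) F i).
Proof. by move=> [P0 [PD _]] H; apply: big_ind. Qed.

Lemma sum_single (A : zmodType) (X : eqType) (r : seq X) (y : X) (v : A) :
  uniq r -> y \in r -> \sum_(x <- r) (if y == x then v else 0) = v.
Proof.
move=> ur yr; rewrite (bigD1_seq y) //= eqxx big1 ?addr0 // => x.
by rewrite eq_sym => /negbTE ->.
Qed.

Lemma in_sum'_uniq (R : comPzRingType) (A : lmodType R) (X : eqType)
  (V : X -> A -> Prop) (Y : X -> Prop) (a : A) :
  (forall x, is_submodule (V x)) -> in_sum' V Y a -> in_sum V Y a.
Proof.
move=> HV [s [Hs ->]].
exists (undup (map fst s)), (fun x => \sum_(p <- s | (p \in s) && (p.1 == x)) p.2); split.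
- exact: undup_uniq.
- move=> x; rewrite mem_undup => /mapP [p ps ->]; split; first by case: (Hs p ps).
  apply: sub_sum => // q /andP[qs /eqP qx]; rewrite -qx; by case: (Hs q qs).
- under [RHS]eq_bigr => x _ do rewrite big_mkcond.
  rewrite exchange_big /= [LHS]big_seq_cond [LHS]big_mkcond /=.
  apply: eq_bigr => p _.
  case ps: (p \in s) => /=; last by rewrite big1.
  by rewrite sum_single ?undup_uniq ?mem_undup ?map_f.
Qed.

Lemma in_sum_in_sum' (R : comPzRingType) (A : lmodType R) (X : eqType)
  (V : X -> A -> Prop) (Y : X -> Prop) (a : A) :
  in_sum V Y a -> in_sum' V Y a.
Proof.
move=> [s [f [_ H1 ->]]]; exists (map (fun x => (x, f x)) s); split.
  by move=> p /mapP [x xs ->]; exact: H1.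
by rewrite big_map.
Qed.

Lemma in_sum'_mono (R : comPzRingType) (A : lmodType R) (X : eqType)
  (V : X -> A -> Prop) (Y Z : X -> Prop) (a : A) :
  (forall x, Y x -> Z x) -> in_sum' V Y a -> in_sum' V Z a.
Proof.
move=> HYZ [s [H1 H2]]; exists s; split => // x xs.
by case: (H1 x xs) => /HYZ.
Qed.

Lemma in_sum'_sub (R : comPzRingType) (A : lmodType R) (X : eqType)
  (V : X -> A -> Prop) (Y : X -> Prop) :
  (forall x, is_submodule (V x)) -> is_submodule (in_sum' V Y).
Proof.
move=> HV; split; [|split].
- by exists [::]; split => //; rewrite big_nil.
- move=> a b [s [H1 ->]] [t [H2 ->]].
  exists (s ++ t); split; last by rewrite big_cat.
  by move=> x; rewrite mem_cat => /orP[/H1|/H2].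
- move=> r a [s [H1 ->]]; exists (map (fun p => (p.1, r *: p.2)) s); split.
  + move=> p /mapP [q qs ->] /=; case: (H1 q qs) => ? Hf; split => //.
    by case: (HV q.1) => _ [_ HZ]; apply: HZ.
  + by rewrite big_map scaler_sumr.
Qed.

Lemma mulsumL (R : comPzRingType) (A : lmodType R) (mul : A -> A -> A)
  (T : Type) (r : seq T) (F : T -> A) b :
  is_comm_algebra mul -> mul (\sum_(i <- r) F i) b = \sum_(i <- r) mul (F i) b.
Proof.
move=> [HC [HD HZ]]; elim: r => [|x r IH].
  by rewrite !big_nil -{1}(scale0r (0 : A)) HZ scale0r.
by rewrite !big_cons HD IH.
Qed.

Lemma mulsumR (R : comPzRingType) (A : lmodType R) (mul : A -> A -> A)
  (T : Type) (r : seq T) (F : T -> A) b :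
  is_comm_algebra mul -> mul b (\sum_(i <- r) F i) = \sum_(i <- r) mul b (F i).
Proof.
move=> H; case: (H) => HC _; rewrite HC mulsumL //; apply: eq_bigr => i _; exact: HC.
Qed.

Lemma prod_grade (R : comPzRingType) (A : lmodType R)
  (mul : A -> A -> A) (X : eqType) (star : X -> X -> X -> Prop)
  (xi : X -> 'Z_2) (V : X -> A -> Prop) p q u w :
  is_comm_algebra mul -> is_Z2_grading star xi ->
  is_decomposition mul star V ->
  in_sum' V (fun x => xi x = p) u -> in_sum' V (fun x => xi x = q) w ->
  in_sum' V (fun x => xi x = p + q) (mul u w).
Proof.
move=> Hc Hg [HV _ _ HM] [s [Hs ->]] [t [Ht ->]].
rewrite mulsumL // big_seq; apply: sub_sum; first exact: in_sum'_sub.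
move=> pp pps; rewrite mulsumR // big_seq; apply: sub_sum; first exact: in_sum'_sub.
move=> qq qqt; case: (Hs pp pps) => Hp Vp; case: (Ht qq qqt) => Hq Vq.
apply: in_sum'_mono (in_sum_in_sum' (HM _ _ _ _ Vp Vq)).
by move=> z /Hg ->; rewrite Hp Hq.
Qed.

Lemma Z2_ne0 (x : 'Z_2) : x != 0 -> x = 1.
Proof. by case: x => [[|[|n]] Hn] //= _; apply: val_inj. Qed.

Lemma split_grade (R : comPzRingType) (A : lmodType R)
  (mul : A -> A -> A) (X : eqType) (star : X -> X -> X -> Prop)
  (xi : X -> 'Z_2) (V : X -> A -> Prop) u :
  is_decomposition mul star V ->
  exists e o, [/\ in_sum' V (fun x => xi x = 0) e,
     in_sum' V (fun x => xi x = 1) o & u = e + o].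
Proof.
move=> [HV Hall _ _]; case: (in_sum_in_sum' (Hall u)) => s [Hs ->].
exists (\sum_(p <- s | xi p.1 == 0) p.2), (\sum_(p <- s | xi p.1 != 0) p.2).
split; last by rewrite [LHS](bigID (fun p => xi p.1 == 0)).
- exists (filter (fun p => xi p.1 == 0) s); split; last by rewrite big_filter.
  move=> p; rewrite mem_filter => /andP[/eqP -> ps]; by case: (Hs p ps).
- exists (filter (fun p => xi p.1 != 0) s); split; last by rewrite big_filter.
  move=> p; rewrite mem_filter => /andP[H ps]; split; last by case: (Hs p ps).
  exact: Z2_ne0.
Qed.

Lemma direct_grade (R : comPzRingType) (A : lmodType R)
  (mul : A -> A -> A) (X : eqType) (star : X -> X -> X -> Prop)
  (xi : X -> 'Z_2) (V : X -> A -> Prop) b :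
  is_decomposition mul star V ->
  in_sum V (fun x => xi x = 0) b -> in_sum V (fun x => xi x = 1) b -> b = 0.
Proof.
move=> [HV _ Hdir _] [s [f [us Hs ->]]] [t [g [ut Ht Hb]]].
have st : forall x, x \in s -> x \notin t.
  move=> x xs; apply/negP => xt.
  by case: (Hs x xs) => H0 _; case: (Ht x xt) => H1 _; rewrite H0 in H1.
have Hz : forall x, x \in s ++ t -> (if x \in s then f x else - g x) = 0.
  apply: Hdir.
  - rewrite cat_uniq us ut /= andbT; apply/hasPn => y yt /=.
    by apply/negP => ys; move: (st y ys); rewrite yt.
  - move=> y; rewrite mem_cat; case ys: (y \in s) => /= H.
      by case: (Hs y ys).
    case: (Ht y H) => _ Hg; case: (HV y) => _ [_ HZ].
    by rewrite -scaleN1r; apply: HZ.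
  - rewrite big_cat /=.
    have -> : \sum_(x <- s) (if x \in s then f x else - g x) = \sum_(x <- s) f x.
      by apply: eq_big_seq => y ->.
    have -> : \sum_(x <- t) (if x \in s then f x else - g x) = \sum_(x <- t) - g x.
      by apply: eq_big_seq => y yt; case: ifP => // ys; move: (st y ys); rewrite yt.
    by rewrite sumrN -Hb subrr.
have {}Hz : forall x, x \in s -> f x = 0.
  by move=> x xs; have := Hz x; rewrite mem_cat xs /=; apply.
by rewrite big_seq big1 // => x; apply: Hz.
Qed.

Theorem proposition4p1 (R : comPzRingType) (A : lmodType R)
  (mul : A -> A -> A) (X : eqType) (star : X -> X -> X -> Prop)
  (e : X) (lam : X -> R) (xi : X -> 'Z_2)
  (I : Type) (V : I -> X -> A -> Prop) (a : I -> A) :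
  (2%:R : R) = 0 ->
  is_comm_algebra mul ->
  is_unit star e ->
  is_Z2_grading star xi ->
  (forall i, is_decomposition mul star (V i)) ->
  is_axial mul V e lam a ->
  (forall i, mul (a i) (a i) = a i) ->
  (forall j i, in_sum (V i) (fun x => xi x = 0) (a j)) /\
  (generated_by mul (fun b => exists i, b = a i) ->
     forall i b, in_sum (V i) (fun x => xi x = 1) b -> b = 0).
Proof.
move=> H2 Hc _ Hg Hdec _ Hid.
have Hc' := Hc; case: Hc' => HC [HD HZ].
have part1 : forall j i, in_sum' (V i) (fun x => xi x = 0) (a j).
  move=> j i; have Hdi := Hdec i; have HVi : forall x, is_submodule (V i x) by case: Hdi.
  have [u [o [He Ho Hu]]] := split_grade xi (a j) Hdi.
  have -> : a j = mul u u + mul o o.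
    rewrite -Hid Hu HD (HC u) (HC o) !HD (HC o u).
    rewrite -[RHS]addr0 -(scale0r (mul u o)) -H2 scaler_nat mulr2n.
    by rewrite [mul u o + mul o o]addrC addrACA.
  case: (in_sum'_sub (fun x => xi x = 0) HVi) => _ [HDs _]; apply: HDs.
  - apply: in_sum'_mono (prod_grade Hc Hg Hdi He He) => x ->; exact: addr0.
  - by apply: in_sum'_mono (prod_grade Hc Hg Hdi Ho Ho) => x ->; apply: val_inj.
split.
  move=> j i; apply: in_sum'_uniq; last exact: part1.
  by case: (Hdec i).
move=> Hgen i b Hb; apply: (direct_grade (Hdec i) _ Hb).
have HVi : forall x, is_submodule (V i x) by case: (Hdec i).
apply: in_sum'_uniq => //; apply: Hgen.
- exact: in_sum'_sub.
- move=> u w Hu Hw; apply: in_sum'_mono (prod_grade Hc Hg (Hdec i) Hu Hw) => x ->; exact: addr0.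
- by move=> u [j ->]; apply: part1.
Qed.
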